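(* Let $p$ be a prime, let $n\geq p^2$ and let $D\subseteq\mathbb{F}_p^n$ be a set of size $|D|<\binom{n+p-2}{p-1}$. Then there exist disjoint sets $T_1,T_2\subseteq\mathbb{F}_p^n$ such that the $p$-dimensional rectangle $T_1\times T_2\times\cdots\times T_2$ contains at least $p^{2n+p-p^2}$ lines, but no lines with direction in $D$.
   Context: The line through $x\in\mathbb{F}_p^n$ in direction $d\in\mathbb{F}_p^n$ is the sequence $\ell_{x,d}=(x+\lambda d)_{\lambda\in\mathbb{F}_p}$ (lines are counted as pairs $(x,d)$). A rectangle $T_1\times\cdots\times T_p$ with $T_i\subseteq\mathbb{F}_p^n$ contains $\ell_{x,d}$ if $x+\lambda d\in T_{\lambda+1}$ for every $\lambda\in\{0,1,\dots,p-1\}$. *)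

(* Defs.v *)
From mathcomp Require Import all_boot all_order all_algebra.
Set Implicit Arguments. Unset Strict Implicit. Unset Printing Implicit Defensive.
Import GRing.Theory.
Local Open Scope ring_scope.

(* A rectangle T_1 x ... x T_p is a family T : 'I_p -> {set 'rV['F_p]_n},
   where T (i : 'I_p) plays the role of T_{i+1}.
   The line l_{x,d} = (x + lambda d)_{lambda in F_p} is contained in it iff
   x + lambda d \in T_{lambda+1} for every lambda in {0,...,p-1}. *)
Definition line_in_rect (p n : nat) (T : 'I_p -> {set 'rV['F_p]_n})
  (x d : 'rV['F_p]_n) : bool :=
  [forall l : 'I_p, x + ((nat_of_ord l)%:R : 'F_p) *: d \in T l].

Definition rect12 (p n : nat) (T1 T2 : {set 'rV['F_p]_n}) : 'I_p -> {set 'rV['F_p]_n} :=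
  fun i => if nat_of_ord i == 0%N then T1 else T2.

(* Number of lines (counted as pairs (x,d)) contained in the rectangle T. *)
Definition num_lines (p n : nat) (T : 'I_p -> {set 'rV['F_p]_n}) : nat :=
  #|[set xd : 'rV['F_p]_n * 'rV['F_p]_n | line_in_rect T xd.1 xd.2]|.

(* Main.v *)
Require Import Defs.
From mathcomp Require Import all_boot all_order all_algebra.
From mathcomp Require Import finfield zify ring.
Set Implicit Arguments. Unset Strict Implicit. Unset Printing Implicit Defensive.
Import GRing.Theory.
Local Open Scope ring_scope.

Section Deg.
Variable F : finFieldType.

Fixpoint pdeg (N : nat) : nat -> ('rV[F]_N -> F) -> Prop :=
  match N return nat -> ('rV[F]_N -> F) -> Prop with
  | 0 => fun _ _ => True
  | N'.+1 => fun d g => exists Pc : 'rV[F]_N' -> {poly F},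
      (forall x, size (Pc x) <= d.+1)%N /\
      (forall j, @pdeg N' (d - j)%N (fun x => (Pc x)`_j)) /\
      (forall v : 'rV[F]_(1 + N'), g v = (Pc (rsubmx v)).[lsubmx v 0 0])
  end.

Lemma pdeg_ext N d (g h : 'rV[F]_N -> F) : pdeg d g -> (forall v, g v = h v) -> pdeg (N:=N) d h.
Proof.
case: N g h => [//|N] g h [Pc [H1 [H2 H3]]] E.
by exists Pc; split=> //; split=> // v; rewrite -E.
Qed.

Lemma pdeg_const N d c : pdeg (N:=N) d (fun _ => c).
Proof.
elim: N d c => [//|N IH] d c.
exists (fun _ => c%:P); split; first by move=> x; rewrite size_polyC; case: (c != 0).
split; last by move=> v; rewrite hornerC.
move=> j; apply: pdeg_ext (IH (d - j)%N (if j == 0%N then c else 0)) _ => x.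
by rewrite coefC.
Qed.

Lemma pdeg_mono N d d' g : (d <= d')%N -> pdeg (N:=N) d g -> pdeg d' g.
Proof.
elim: N d d' g => [//|N IH] d d' g le [Pc [H1 [H2 H3]]].
exists Pc; split; first by move=> x; apply: leq_trans (H1 x) _.
split=> // j; apply: IH (H2 j); exact: leq_sub2r.
Qed.

Lemma pdeg_add N d g h : pdeg (N:=N) d g -> pdeg d h -> pdeg d (fun v => g v + h v).
Proof.
elim: N d g h => [//|N IH] d g h [Pc [H1 [H2 H3]]] [Qc [K1 [K2 K3]]].
exists (fun x => Pc x + Qc x); split.
  by move=> x; apply: leq_trans (size_add _ _) _; rewrite geq_max H1 K1.
split; last by move=> v; rewrite hornerD H3 K3.
move=> j; apply: pdeg_ext (IH _ _ _ (H2 j) (K2 j)) _ => x; by rewrite coefD.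
Qed.

Lemma pdeg_sum N d (I : Type) (r : seq I) (P : pred I) (G : I -> 'rV[F]_N -> F) :
  (forall i, P i -> pdeg d (G i)) -> pdeg d (fun v => \sum_(i <- r | P i) G i v).
Proof.
move=> HG; elim: r => [|i r IHr].
  by apply: pdeg_ext (pdeg_const _ _ 0) _ => v; rewrite big_nil.
case Pi: (P i).
  by apply: pdeg_ext (pdeg_add (HG i Pi) IHr) _ => v; rewrite big_cons Pi.
by apply: pdeg_ext IHr _ => v; rewrite big_cons Pi.
Qed.

Lemma pdeg_mul N d1 d2 g h : pdeg (N:=N) d1 g -> pdeg d2 h ->
  pdeg (d1 + d2) (fun v => g v * h v).
Proof.
elim: N d1 d2 g h => [//|N IH] d1 d2 g h [Pc [H1 [H2 H3]]] [Qc [K1 [K2 K3]]].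
exists (fun x => Pc x * Qc x); split.
  move=> x; apply: leq_trans (size_mul_leq _ _) _.
  have := H1 x; have := K1 x; lia.
split; last by move=> v; rewrite hornerM H3 K3.
move=> j.
suff S : pdeg (d1 + d2 - j)%N (fun x => \sum_(i < j.+1) (Pc x)`_i * (Qc x)`_(j - i)).
  by apply: pdeg_ext S _ => x; rewrite coefM.
apply: pdeg_sum => i _.
case: (leqP i d1) => hi; last first.
  apply: pdeg_ext (pdeg_const _ _ 0) _ => x.
  by rewrite nth_default ?mul0r //; apply: leq_trans (H1 x) hi.
case: (leqP (j - i) d2) => hj; last first.
  apply: pdeg_ext (pdeg_const _ _ 0) _ => x.
  by rewrite [(Qc x)`_ _]nth_default ?mulr0 //; apply: leq_trans (K1 x) hj.
apply: pdeg_mono (IH _ _ _ _ (H2 i) (K2 (j - i)%N)).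
have := ltn_ord i; lia.
Qed.

Lemma pdeg_prod N (I : Type) (r : seq I) (P : pred I) (G : I -> 'rV[F]_N -> F)
   (dd : I -> nat) :
  (forall i, P i -> pdeg (dd i) (G i)) ->
  pdeg (\sum_(i <- r | P i) dd i)%N (fun v => \prod_(i <- r | P i) G i v).
Proof.
move=> HG; elim: r => [|i r IHr].
  by apply: pdeg_ext (pdeg_const _ _ 1) _ => v; rewrite big_nil.
case Pi: (P i).
  rewrite big_cons Pi.
  by apply: pdeg_ext (pdeg_mul (HG i Pi) IHr) _ => v; rewrite big_cons Pi.
by rewrite big_cons Pi; apply: pdeg_ext IHr _ => v; rewrite big_cons Pi.
Qed.

Lemma pdeg_var N d (i : 'I_N) : (0 < d)%N -> pdeg d (fun v : 'rV[F]_N => v 0 i).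
Proof.
elim: N d i => [|N IH] d i d0; first by case: i.
case: (unliftP ord0 i) => [j ->|->].
  exists (fun x => (x 0 j)%:P); split; first by move=> x; rewrite size_polyC; case: (_ != 0).
  split.
    move=> k; case: (eqVneq k 0%N) => [->|nk].
      by rewrite subn0; apply: pdeg_ext (IH _ j d0) _ => x; rewrite coefC.
    by apply: pdeg_ext (pdeg_const _ _ 0) _ => x; rewrite coefC (negbTE nk).
  move=> v; rewrite hornerC mxE; congr (v _ _); exact: val_inj.
exists (fun x => 'X); split; first by move=> x; rewrite size_polyX.
split.
  move=> k; apply: pdeg_ext (pdeg_const _ _ (if k == 1%N then 1 else 0)) _ => x.
  by rewrite coefX; case: (k == 1%N).
move=> v; rewrite hornerX mxE; congr (v _ _); exact: val_inj.
Qed.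


Lemma lemA m k : (k <= m)%N -> ((m.+1) ^ k <= k.+1 * m ^ k)%N.
Proof.
elim: k => [|k IHk] hk; first by rewrite !expn0.
have := IHk (ltnW hk); rewrite !expnS.
move: ((m.+1) ^ k)%N (m ^ k)%N => X Y; nia.
Qed.

Lemma lemB m u : (0 < u)%N -> (u <= m)%N -> (m ^ u.-1 <= u ^ m.-1)%N.
Proof.
case: u => // k _; elim: m => [//|m IHm] km /=.
case: (eqVneq k m) => [->//|ne].
have km' : (k.+1 <= m)%N by rewrite ltn_neqAle ne -ltnS km.
have h1 := IHm km'; have h2 := lemA (ltnW km').
case: m {IHm ne km} km' h1 h2 => // m _ /= h1 h2; rewrite expnS.
move: h1 h2; move: (m.+2 ^ k)%N (m.+1 ^ k)%N (k.+1 ^ m)%N => X Y Z; nia.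
Qed.

Local Notation q := #|F|.

Lemma q_gt1 : (1 < q)%N.
Proof. by apply/card_gt1P; exists 0, 1; rewrite !inE eq_sym oner_eq0. Qed.

Lemma expq1 (y : F) : y != 0 -> y ^+ q.-1 = 1.
Proof.
move=> y0; apply: (mulIf y0); rewrite mul1r -exprSr prednK ?expf_card //.
by apply: ltn_trans q_gt1.
Qed.

Definition red (j : nat) : nat := if j == 0%N then 0%N else ((j.-1 %% q.-1).+1)%N.

Lemma red_lt j : (red j < q)%N.
Proof.
rewrite /red; case: eqP => _; first by apply: ltn_trans q_gt1.
have := ltn_pmod j.-1 (_ : 0 < q.-1)%N; have := q_gt1; case: (q) => // [[|r]] //= _.
by move=> /(_ isT).
Qed.

Lemma red_le j : (red j <= j)%N.
Proof.
rewrite /red; case: eqP => // /eqP j0.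
move: (leq_mod j.-1 q.-1) j0; move: (j.-1 %% q.-1)%N => r; lia.
Qed.

Lemma red_exp (y : F) j : y ^+ j = y ^+ red j.
Proof.
rewrite /red; case: eqP => [->//|/eqP j0].
rewrite -{1}(prednK (_ : 0 < j)%N) ?lt0n // {1}(divn_eq j.-1 q.-1).
case: (eqVneq y 0) => [->|y0]; first by rewrite !expr0n.
by rewrite -addnS exprD mulnC exprM expq1 // expr1n mul1r.
Qed.

Definition nz N (g : 'rV[F]_N -> F) := #|[set v | g v != 0]|.

Definition hx N (x : 'rV[F]_N) (y : F) : 'rV[F]_(1 + N) := row_mx (const_mx y) x.

Lemma nz_split N (g : 'rV[F]_N.+1 -> F) :
  nz g = (\sum_(x : 'rV[F]_N) #|[set y | g (hx x y) != 0%R]|)%N.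
Proof.
rewrite /nz -sum1_card.
rewrite (reindex (fun xy : 'rV[F]_N * F => hx xy.1 xy.2)) /=; last first.
  exists (fun v : 'rV[F]_(1 + N) => (rsubmx v, lsubmx v 0 0)) => [[x y] _|v _] /=.
    by rewrite /hx row_mxKr row_mxKl mxE.
  rewrite /hx -[RHS]hsubmxK; congr row_mx; apply/matrixP => i j.
  by rewrite !ord1 mxE.
transitivity (\sum_x \sum_(y | g (hx x y) != 0%R) 1)%N; last first.
  by apply: eq_bigr => x _; rewrite -sum1_card; apply: eq_bigl => y; rewrite !inE.
rewrite pair_big_dep; apply: eq_bigl => -[x y]; by rewrite !inE.
Qed.


Lemma hx_r N (x : 'rV[F]_N) y : rsubmx (hx x y) = x.
Proof. by rewrite /hx row_mxKr. Qed.
Lemma hx_l N (x : 'rV[F]_N) y : lsubmx (hx x y) 0 0 = y.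
Proof. by rewrite /hx row_mxKl mxE. Qed.

Lemma hx_surj N (v : 'rV[F]_(1 + N)) : v = hx (rsubmx v) (lsubmx v 0 0).
Proof.
rewrite /hx -[LHS]hsubmxK; congr row_mx; apply/matrixP => i j.
by rewrite !ord1 !mxE.
Qed.

Theorem AF N d (g : 'rV[F]_N -> F) : pdeg d g -> (exists v, g v != 0) ->
  (q ^ (N * q.-1) <= nz g ^ q.-1 * q ^ d)%N.
Proof.
elim: N d g => [|N IH] d g.
  move=> _ [v gv]; rewrite mul0n expn0 muln_gt0 !expn_gt0 (ltnW q_gt1) andbT.
  by apply/orP; left; apply/card_gt0P; exists v; rewrite inE.
move=> [Pc [H1 [H2 H3]]] [v0 gv0].
pose c (i : nat) (x : 'rV[F]_N) := \sum_(j < d.+1 | red j == i) (Pc x)`_j.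
have ceval x y : g (hx x y) = \sum_(i < q) c i x * y ^+ i.
  rewrite H3 hx_r hx_l (horner_coef_wide _ (H1 x)).
  under eq_bigr => j _ do rewrite red_exp.
  rewrite /c; under [RHS]eq_bigr => i _ do rewrite mulr_suml.
  rewrite (exchange_big_dep xpredT) //=; apply: eq_bigr => j _.
  rewrite (bigD1 (Ordinal (red_lt j))) //= big1 ?addr0 // => i /andP[/eqP ri ne].
  by case/eqP: ne; apply/val_inj; rewrite /= ri.
have cdeg i : pdeg (d - i)%N (c i).
  apply: pdeg_sum => j /eqP <-; apply: pdeg_mono (H2 j).
  by apply: leq_sub2l; apply: red_le.
have cz i x : (d < i)%N -> c i x = 0.
  move=> di; rewrite /c big1 // => j /eqP rj; move: (red_le j) (ltn_ord j); lia.
have ex : exists i, (i < q)%N && [exists x, c i x != 0].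
  case: (pickP (fun i : 'I_q => c i (rsubmx (v0 : 'rV[F]_(1 + N))) != 0)) => [i ci|none].
    by exists i; rewrite ltn_ord /=; apply/existsP; exists (rsubmx (v0 : 'rV[F]_(1 + N))).
  case/negP: gv0; have -> : v0 = hx (rsubmx (v0 : 'rV[F]_(1 + N))) (lsubmx (v0 : 'rV[F]_(1 + N)) 0 0).
    exact: hx_surj.
  rewrite ceval big1 // => i _; move/negbFE/eqP: (none i) => ->; exact: mul0r.
have exb : forall i, (i < q)%N && [exists x, c i x != 0] -> (i <= q)%N.
  by move=> i /andP[/ltnW].
case: (ex_maxnP ex exb) => t /andP[tq /existsP[x0 cx0]] tmax.
have td : (t <= d)%N.
  by rewrite leqNgt; apply/negP => dt; move: cx0; rewrite cz ?eqxx.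
have IHt := IH _ _ (cdeg t) (ex_intro _ x0 cx0).
have cnt : ((q - t) * nz (c t) <= nz g)%N.
  rewrite nz_split /nz mulnC -sum_nat_const.
  rewrite [X in (_ <= X)%N](bigID (fun x => c t x != 0)) /= -[X in (X <= _)%N]addn0.
  apply: leq_add => //.
  rewrite (eq_bigl (fun x => c t x != 0)); last by move=> x; rewrite inE.
  apply: leq_sum => x ctx.
  pose P := \poly_(i < q) c i x.
  have Pt : P`_t = c t x by rewrite coef_poly tq.
  have P0 : P != 0 by apply/eqP => P0; move: ctx; rewrite -Pt P0 coef0 eqxx.
  have Ps : (size P <= t.+1)%N.
    apply/leq_sizeP => j tj; rewrite coef_poly; case: ifP => // jq.
    have : ~~ ((j < q)%N && [exists x, c j x != 0]).
      by apply/negP => /tmax; rewrite leqNgt tj.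
    rewrite jq /= negb_exists => /forallP /(_ x); by rewrite negbK => /eqP.
  have roots : (#|[set y | P.[y] == 0%R]| <= t)%N.
    have rall : all (root P) (enum [set y | P.[y] == 0%R]).
      by apply/allP => y; rewrite mem_enum inE.
    have := max_poly_roots P0 rall (enum_uniq _).
    rewrite -cardE => H; rewrite -ltnS; exact: leq_trans H Ps.
  have -> : [set y | g (hx x y) != 0%R] = ~: [set y | P.[y] == 0%R].
    by apply/setP => y; rewrite !inE ceval horner_poly.
  have Hc : (#|[set y | P.[y] == 0%R]| + #|~: [set y | P.[y] == 0%R]| = q)%N by rewrite cardsC.
  by rewrite -Hc leq_subLR; apply: leq_add.
have B : (q ^ q.-1 <= (q - t) ^ q.-1 * q ^ t)%N.
  have H := lemB (m:=q) (u:=q-t) (_ : 0 < q - t)%N (leq_subr _ _).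
  have E : (q ^ q.-1 = q ^ (q - t).-1 * q ^ t)%N.
    by rewrite -expnD; congr expn; move: tq; lia.
  by rewrite E leq_mul2r H ?orbT // subn_gt0.
rewrite mulSn expnD.
apply: leq_trans (leq_mul B IHt) _.
have E2 : ((q - t) ^ q.-1 * q ^ t * (nz (c t) ^ q.-1 * q ^ (d - t)) =
          ((q - t) * nz (c t)) ^ q.-1 * q ^ d)%N.
  rewrite expnMn -[in RHS](subnKC td) expnD.
  move: ((q - t) ^ q.-1)%N (q ^ t)%N (nz (c t) ^ q.-1)%N (q ^ (d - t))%N => a b c' e.
  nia.
rewrite E2 leq_mul2r; apply/orP; right; rewrite leq_exp2r //.
by move: q_gt1; lia.
Qed.


End Deg.

Section Fp.
Variable p : nat.
Hypothesis pp : prime p.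
Local Notation F := 'F_p.

Lemma p_gt1 : (1 < p)%N. Proof. exact: prime_gt1. Qed.

Lemma pF0 : (p%:R : F) = 0. Proof. exact: pchar_Fp_0 pp. Qed.

Lemma expp1 (y : F) : y != 0 -> y ^+ p.-1 = 1.
Proof. by move=> y0; have := expq1 y0; rewrite (card_Fp pp). Qed.

Lemma PS j : (j < p.-1)%N -> \sum_(y : F) y ^+ j = 0.
Proof.
move=> jp; case: (posnP j) => [->|j0].
  by rewrite (eq_bigr (fun _ => 1)) ?sumr_const ?(card_Fp pp) ?pF0 // => y _; rewrite expr0.
pose R := [set y : F | y ^+ j == 1].
have R_le : (#|R| <= j)%N.
  have P0 : ('X^j - 1 : {poly F}) != 0.
    by rewrite -size_poly_eq0 size_XnsubC.
  have rall : all (root ('X^j - 1)) (enum R).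
    by apply/allP => y; rewrite mem_enum inE rootE !hornerE subr_eq0.
  have := max_poly_roots P0 rall (enum_uniq _).
  by rewrite -cardE size_XnsubC.
have : ~~ ([set y : F | y != 0] \subset R).
  apply/negP => /subset_leq_card; rewrite (cardsE (predC1 0)).
  rewrite cardC1 (card_Fp pp) => H; move: (leq_trans H R_le) jp; lia.
case/subsetPn => a; rewrite !inE => a0 aR.
have E1 : \sum_(y : F) y ^+ j = \sum_(y : F) (a * y) ^+ j.
  exact: (reindex_inj (mulfI a0)).
have E : \sum_(y : F) y ^+ j = a ^+ j * \sum_(y : F) y ^+ j.
  by rewrite {1}E1 mulr_sumr; apply: eq_bigr => y _; rewrite exprMn.
apply/eqP; move/eqP: E; rewrite -subr_eq0 -{1}[X in X - _]mul1r -mulrBl mulf_eq0.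
by rewrite subr_eq0 eq_sym (negbTE aR).
Qed.

Lemma PSlast : \sum_(y : F) y ^+ p.-1 = -1.
Proof.
rewrite (bigD1 0) //= expr0n /= (_ : p.-1 == 0%N = false); last by move: p_gt1; lia.
rewrite add0r (eq_bigr (fun _ => 1)) => [|y y0]; last exact: expp1.
rewrite sumr_const (_ : #|_| = p.-1); last first.
  by move: (cardC1 (0:F)); rewrite (card_Fp pp) => <-; apply: eq_card => y; rewrite !inE.
apply/eqP; rewrite -addr_eq0 -mulrSr prednK ?pF0 //; move: p_gt1; lia.
Qed.

Lemma sumL (s : seq (F * F)) j : (j + size s <= p.-1)%N ->
  \sum_(y : F) y ^+ j * \prod_(ab <- s) (ab.1 + y * ab.2) =
  if (j + size s == p.-1)%N then - \prod_(ab <- s) ab.2 else 0.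
Proof.
elim: s j => [|[a b] s IH] j /=.
  rewrite addn0 => jp; under eq_bigr do rewrite big_nil mulr1.
  case: eqP => [->|ne]; first by rewrite PSlast big_nil.
  by rewrite PS // ltn_neqAle jp andbT; apply/eqP.
move=> js.
transitivity ((\sum_(y : F) y ^+ j * \prod_(ab <- s) (ab.1 + y * ab.2)) * a
   + (\sum_(y : F) y ^+ j.+1 * \prod_(ab <- s) (ab.1 + y * ab.2)) * b).
  rewrite !mulr_suml -big_split; apply: eq_bigr => y _; rewrite big_cons /= exprS.
  ring.
rewrite IH; last by move: js; lia.
rewrite IH; last by move: js; lia.
rewrite (_ : (j + size s == p.-1)%N = false); last by apply/negbTE; move: js; lia.
rewrite mul0r add0r big_cons /= addSn -addnS.
by case: ifP; rewrite ?mul0r // mulNr mulrC.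
Qed.


Lemma prod_count n (t : seq 'I_n) (G : 'I_n -> F) :
  \prod_(k <- t) G k = \prod_(k : 'I_n) G k ^+ count_mem k t.
Proof.
elim: t => [|a t IH]; first by rewrite big_nil big1 // => k _; rewrite expr0.
rewrite big_cons IH /=; under [RHS]eq_bigr do rewrite exprD.
rewrite big_split /=; congr (_ * _).
rewrite (bigD1 a) //= eqxx expr1 big1 ?mulr1 // => k ka.
by rewrite eq_sym (negbTE ka) expr0.
Qed.

Lemma sum_count n (t : seq 'I_n) : (\sum_(k : 'I_n) count_mem k t)%N = size t.
Proof.
elim: t => [|a t IH]; first by rewrite big1.
rewrite /= big_split /= IH (bigD1 a) //= eqxx big1 // => k ka.
by rewrite eq_sym (negbTE ka).
Qed.

Lemma sum_prod_rV n (G : 'I_n -> F -> F) :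
  \sum_(v : 'rV[F]_n) \prod_k G k (v 0 k) = \prod_k \sum_(y : F) G k y.
Proof.
rewrite bigA_distr_bigA /=.
rewrite (reindex (fun f : {ffun 'I_n -> F} => \row_k f k)) /=; last first.
  exists (fun v : 'rV[F]_n => [ffun k => v 0 k]) => [f _|v _].
    by apply/ffunP => k; rewrite ffunE mxE.
  by apply/rowP => k; rewrite mxE ffunE.
by apply: eq_bigr => f _; apply: eq_bigr => k _; rewrite mxE.
Qed.

Definition hpoly n m (w : 'I_m -> F) (s : 'I_m -> seq 'I_n) (v : 'rV[F]_n) :=
  \sum_i w i * \prod_(k <- s i) v 0 k.

Lemma hpoly_hom n m w (s : 'I_m -> seq 'I_n) y v :
  (forall i, size (s i) = p.-1) -> hpoly w s (y *: v) = y ^+ p.-1 * hpoly w s v.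
Proof.
move=> ss; rewrite /hpoly mulr_sumr; apply: eq_bigr => i _.
rewrite mulrCA; congr (_ * _); rewrite -(ss i).
elim: (s i) => [|a t IH]; first by rewrite !big_nil mulr1.
by rewrite !big_cons IH /= mxE exprS; ring.
Qed.

Lemma hpoly_sum n m w (s : 'I_m -> seq 'I_n) x d :
  (forall i, size (s i) = p.-1) ->
  \sum_(y : F) hpoly w s (x + y *: d) = - hpoly w s d.
Proof.
move=> ss; rewrite /hpoly exchange_big /= -sumrN; apply: eq_bigr => i _.
rewrite -mulr_sumr -mulrN; congr (_ * _).
have := @sumL (map (fun k => (x 0 k, d 0 k)) (s i)) 0%N.
rewrite size_map ss add0n leqnn eqxx => /(_ isT) E.
rewrite big_map in E; rewrite -E; apply: eq_bigr => y _.
by rewrite expr0 mul1r big_map; apply: eq_bigr => k _; rewrite !mxE.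
Qed.


Definition dualm n (t : seq 'I_n) (v : 'rV[F]_n) :=
  \prod_(k : 'I_n) (v 0 k) ^+ (p.-1 - count_mem k t).

Lemma dual_eq n (t t0 : seq 'I_n) : size t = p.-1 -> size t0 = p.-1 ->
  \sum_(v : 'rV[F]_n) (\prod_(k <- t) v 0 k) * dualm t0 v =
  if perm_eq t t0 then (-1) ^+ n else 0.
Proof.
move=> st st0.
under eq_bigr do rewrite prod_count /dualm -big_split /=.
rewrite (sum_prod_rV (fun k y => y ^+ count_mem k t * y ^+ (p.-1 - count_mem k t0))).
case: ifP => pe.
  rewrite (eq_bigr (fun _ => -1)) ?prodr_const ?card_ord // => k _.
  have := (permP pe) (pred1 k) => /= ->.
  under eq_bigr do rewrite -exprD.
  rewrite subnKC ?PSlast //; rewrite -st0; exact: count_size.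
have [k lt] : exists k, (count_mem k t < count_mem k t0)%N.
  case: (pickP (fun k => count_mem k t < count_mem k t0)%N) => [k kk|none].
    by exists k.
  have le k : (count_mem k t0 <= count_mem k t)%N by rewrite leqNgt none.
  have := @sumnB _ (index_enum 'I_n) xpredT _ _ (fun k _ => le k).
  rewrite !sum_count st st0 subnn => /eqP; rewrite sum_nat_eq0 => /forallP H.
  case/negP: pe; rewrite /perm_eq; apply/allP => x _ /=.
  by rewrite eqn_leq le andbT -subn_eq0; apply: (H x).
rewrite (bigD1 k) //= (_ : \sum_(y : F) _ = 0) ?mul0r //.
under eq_bigr do rewrite -exprD.
by apply: PS; move: lt (count_size (pred1 k) t0); rewrite st0 /=; lia.
Qed.

Lemma exist_f n (D : {set 'rV[F]_n}) : (0 < n)%N ->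
  (#|D| < 'C(n + p - 2, p - 1))%N ->
  exists m (w : 'I_m -> F) (s : 'I_m -> seq 'I_n),
    (forall i, size (s i) = p.-1) /\ (forall d, d \in D -> hpoly w s d = 0) /\
    exists v, hpoly w s v = 1.
Proof.
case: n D => // n D _ HD.
pose S := [set t : (p.-1).-tuple 'I_n.+1 | sorted leq (map val t)].
have cS : #|S| = 'C(p.-1 + n, p.-1) := card_sorted_tuples _ _.
have HD' : (#|D| < #|S|)%N.
  rewrite cS; move: HD; have -> : (n.+1 + p - 2 = p.-1 + n)%N by move: p_gt1; lia.
  by have -> : (p - 1 = p.-1)%N by lia.
pose m := #|S|.
pose s (i : 'I_m) : seq 'I_n.+1 := val (enum_val i : (p.-1).-tuple 'I_n.+1).
pose M : 'M[F]_(m, #|D|) := \matrix_(i, j) \prod_(k <- s i) (enum_val j : 'rV_n.+1) 0 k.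
have rK : (0 < \rank (kermx M))%N.
  by rewrite mxrank_ker; move: (rank_leq_col M) HD'; rewrite /m; lia.
have K0 : kermx M != 0 by rewrite -mxrank_eq0 -lt0n.
have [r Kr] : exists r, row r (kermx M) != 0.
  case: (pickP (fun r => row r (kermx M) != 0)) => [r Kr|none]; first by exists r.
  case/negP: K0; apply/eqP/row_matrixP => r; rewrite row0.
  by move/negbFE/eqP: (none r).
pose u := row r (kermx M).
have uM : u *m M = 0 by rewrite -row_mul mulmx_ker row0.
pose f := hpoly (fun i => u 0 i) s.
have ss i : size (s i) = p.-1 by rewrite /s size_tuple.
have fD d : d \in D -> f d = 0.
  move=> dD; have := congr1 (fun A : 'M[F]_(1, #|D|) => A 0 (enum_rank_in dD d)) uM.
  rewrite !mxE => <-; rewrite /f /hpoly; apply: eq_bigr => i _.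
  by rewrite [M _ _]mxE enum_rankK_in.
have [v1 fv1] : exists v, f v != 0.
  case: (pickP (fun v => f v != 0)) => [v fv|none]; first by exists v.
  exfalso; apply: (negP Kr); apply/eqP/rowP => i0; rewrite mxE.
  have key : u 0 i0 * (-1) ^+ n.+1 = 0.
    transitivity (\sum_v f v * dualm (s i0) v); last first.
      by apply: big1 => v _; move/negbFE/eqP: (none v) => ->; rewrite mul0r.
    rewrite /f /hpoly; under [RHS]eq_bigr do rewrite mulr_suml.
    rewrite (exchange_big _ _ _ xpredT xpredT) /= (bigD1 i0) //= [X in _ + X]big1 ?addr0; last first.
      move=> i ne; under eq_bigr do rewrite -mulrA; rewrite -mulr_sumr dual_eq //.
    case: ifP => pe; last by rewrite mulr0.
    exfalso; case/negP: ne.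
    have si := enum_valP i; have si0 := enum_valP i0; rewrite !inE in si si0.
    have E : map val (val (enum_val i)) = map val (val (enum_val i0)).
      by apply: (sorted_eq leq_trans anti_leq) => //; exact: perm_map.
    have E2 : val (enum_val i) = val (enum_val i0) := inj_map val_inj E.
    by apply/eqP/enum_val_inj/val_inj.
    by under eq_bigr do rewrite -mulrA; rewrite -mulr_sumr dual_eq ?perm_refl.
  by move/eqP: key; rewrite mulf_eq0 signr_eq0 orbF mxE => /eqP ->; rewrite mxE.
exists m, (fun i => u 0 i / f v1), s; split=> //.
have hp v : hpoly (fun i => u 0 i / f v1) s v = f v / f v1.
  by rewrite /f /hpoly mulr_suml; apply: eq_bigr => i _; rewrite mulrAC.
split; first by move=> d dD; rewrite hp fD // mul0r.
by exists v1; rewrite hp divff.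
Qed.

End Fp.

Section Main.
Variable p : nat.
Hypothesis pp : prime p.
Local Notation F := 'F_p.

Lemma Fp_val_lt (y : F) : (nat_of_ord y < p)%N.
Proof. by have := ltn_ord y; move: (ltn_ord y) => _; rewrite [X in (_ < X)%N -> _](Fp_cast pp). Qed.

Lemma Fp_valK (y : F) : (nat_of_ord y)%:R = y.
Proof. by apply: val_inj; rewrite /= (val_Fp_nat pp) modn_small // Fp_val_lt. Qed.

Lemma natFp0 (l : 'I_p) : ((l%:R : F) == 0) = (nat_of_ord l == 0%N).
Proof.
by rewrite -val_eqE /= (val_Fp_nat pp) modn_small.
Qed.

Lemma Fp_eq0 (y : F) : (y == 0) = (nat_of_ord y == 0%N).
Proof. by rewrite -val_eqE. Qed.

Lemma powp (y : F) : y ^+ p.-1 = if y == 0 then 0 else 1.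
Proof.
case: eqP => [->|/eqP y0]; last exact: expp1.
by rewrite expr0n; have := p_gt1 pp; case: (p) => [|[|k]].
Qed.

Lemma lineE n (f : 'rV[F]_n -> F) (x d : 'rV[F]_n) :
  line_in_rect (rect12 [set v | f v == 0] [set v | f v == 1]) x d =
  [forall y : F, f (x + y *: d) == y ^+ p.-1].
Proof.
apply/forallP/forallP => H y.
  have := H (Ordinal (Fp_val_lt y)); rewrite /rect12 /= Fp_valK powp.
  by rewrite Fp_eq0; case: ifP; rewrite inE.
by have := H (y%:R); rewrite powp natFp0 /rect12; case: ifP; rewrite inE.
Qed.



Lemma main_Fp n (D : {set 'rV[F]_n}) :
  (p ^ 2 <= n)%N -> (#|D| < 'C(n + p - 2, p - 1))%N ->
  exists T1 T2 : {set 'rV[F]_n},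
    [disjoint T1 & T2] /\
    (p ^ (2 * n + p - p ^ 2) <= num_lines (@rect12 p n T1 T2))%N /\
    (forall x d : 'rV[F]_n, d \in D -> ~~ line_in_rect (@rect12 p n T1 T2) x d).
Proof.
move=> pn HD.
have p1 := p_gt1 pp.
have n0 : (0 < n)%N by move: pn; rewrite expnS expn1; nia.
have [m [w [s [ss [fD [v1 fv1]]]]]] := exist_f pp n0 HD.
pose f := hpoly w s.
exists [set v | f v == 0], [set v | f v == 1].
split.
  by rewrite disjoint_subset; apply/subsetP => v; rewrite !inE => /eqP ->; rewrite eq_sym oner_eq0.
split; last first.
  move=> x d dD; rewrite lineE; apply/negP => /forallP H.
  have E1 : \sum_(y : F) f (x + y *: d) = -1.
    by rewrite -(PSlast pp); apply: eq_bigr => y _; apply/eqP.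
  have fd : f d = 0 := fD d dD.
  have := hpoly_sum pp w x d ss; rewrite -/f E1 fd oppr0 => /eqP.
  by rewrite oppr_eq0 oner_eq0.
pose G (v : 'rV[F]_(n + n)) := \prod_(y : F)
   (1 - (f (lsubmx v + y *: rsubmx v) - y ^+ p.-1) ^+ p.-1).
have GE v : (G v != 0) = [forall y : F, f (lsubmx v + y *: rsubmx v) == y ^+ p.-1].
  apply/prodf_neq0/forallP => H y.
    have := H y isT; case: (eqVneq (f (lsubmx v + y *: rsubmx v) - y ^+ p.-1) 0).
      by move/eqP; rewrite subr_eq0.
    by move=> /(expp1 pp) ->; rewrite subrr eqxx.
  move=> _; have := H y; rewrite -subr_eq0 => /eqP ->.
  by rewrite powp eqxx subr0 oner_eq0.
have hlin (y : F) (k : 'I_n) :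
    pdeg 1 (fun v : 'rV[F]_(n + n) => (lsubmx v + y *: rsubmx v) 0 k).
  apply: pdeg_ext (pdeg_add (pdeg_var F (lshift n k) (isT : (0 < 1)%N))
     (pdeg_mul (pdeg_const _ 0 y) (pdeg_var F (rshift n k) (isT : (0 < 1)%N)))) _ => v.
  by rewrite !mxE.
have hf (y : F) : pdeg p.-1 (fun v : 'rV[F]_(n + n) => f (lsubmx v + y *: rsubmx v)).
  rewrite /f /hpoly; apply: pdeg_sum => i _.
  have := pdeg_prod (s i) (P := xpredT) (fun k _ => hlin y k) (dd := fun _ => 1%N).
  rewrite sum1_size ss => H; exact: pdeg_mul (pdeg_const _ 0 (w i)) H.
have hg (y : F) : pdeg (p.-1 * p.-1) (fun v : 'rV[F]_(n + n) =>
     1 - (f (lsubmx v + y *: rsubmx v) - y ^+ p.-1) ^+ p.-1).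
  have ha := pdeg_add (hf y) (pdeg_const _ p.-1 (- y ^+ p.-1)).
  have := pdeg_prod (index_enum 'I_p.-1) (P := xpredT) (fun k _ => ha) (dd := fun _ => p.-1).
  rewrite sum_nat_const card_ord => H.
  apply: pdeg_ext (pdeg_add (pdeg_const _ _ 1) (pdeg_mul (pdeg_const _ 0 (-1)) H)) _ => v.
  by rewrite prodr_const card_ord mulN1r.
have Gdeg : pdeg (p * (p.-1 * p.-1)) G.
  have := pdeg_prod (index_enum F) (P := xpredT) (fun y _ => hg y) (dd := fun _ => (p.-1 * p.-1)%N).
  by rewrite sum_nat_const (card_Fp pp).
have Gnz : exists v, G v != 0.
  exists (row_mx 0 v1); rewrite GE; apply/forallP => y.
  by rewrite row_mxKl row_mxKr add0r /f hpoly_hom // fv1 mulr1.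
have := AF Gdeg Gnz; rewrite (card_Fp pp) => AFr.
have Gc : (nz G <= num_lines (rect12 [set v | f v == 0%R] [set v | f v == 1%R]))%N.
  have inj : injective (fun v : 'rV[F]_(n + n) => (lsubmx v, rsubmx v)).
    by move=> a b [] E1 E2; rewrite -[a]hsubmxK -[b]hsubmxK E1 E2.
  rewrite /nz /num_lines -(card_imset _ inj); apply: subset_leq_card.
  apply/subsetP => _ /imsetP[v vin ->]; rewrite !inE /= lineE -GE.
  by rewrite inE in vin.
apply: leq_trans Gc.
have eqE : ((n + n) * p.-1 = (2 * n + p - p ^ 2) * p.-1 + p * (p.-1 * p.-1))%N.
  move: pn p1; rewrite expnS expn1; case: (p) => // k; rewrite /=; nia.
move: AFr; rewrite eqE expnD expnM leq_pmul2r ?expn_gt0 ?(ltnW p1) //.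
by rewrite leq_exp2r // -ltnS prednK ?(ltnW p1).
Qed.

End Main.

Local Close Scope ring_scope.

Theorem theorem3p3 (p n : nat) (D : {set 'rV['F_p]_n}) :
  prime p -> (p ^ 2 <= n)%N -> (#|D| < 'C(n + p - 2, p - 1))%N ->
  exists T1 T2 : {set 'rV['F_p]_n},
    [disjoint T1 & T2] /\
    (p ^ (2 * n + p - p ^ 2) <= num_lines (@rect12 p n T1 T2))%N /\
    (forall x d : 'rV['F_p]_n, d \in D -> ~~ line_in_rect (@rect12 p n T1 T2) x d).
Proof.
move=> pp pn HD; exact (@main_Fp p pp n D pn HD).
Qed.
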